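(* Let $({\mathbf\Lambda}^\star,{\mathbf V}^\star)$ with ${\mathbf\Lambda}^\star,{\mathbf V}^\star\ge0$ be a minimizer of $F$ over pairs of entrywise nonnegative matrices. Then $\mathcal U_s(\pi_{{\mathbf\Lambda}^\star,{\mathbf V}^\star},\ell)\le\epsilon_s$ for all $s\in[K]$ and $\ell\in[\![L]\!]$.
   Context: Let $K\ge 2$, $d\ge1$, and let $(X,S,Y)$ be a random triple with values in $\mathbb R^d\times[K]\times\mathbb R$, $\mathbb E[Y^2]<\infty$. Put $\eta(x)=\mathbb E[Y\mid X=x]$, $p_s=\mathbb P(S=s)>0$, $\tau_s(x)=\mathbb P(S=s\mid X=x)$, $t_s(x)=1-\tau_s(x)/p_s$, $\mathbf t(x)=(t_s(x))_{s\in[K]}$. Fix $B>0$, $L\in\mathbb N$, $\beta>0$, $\boldsymbol\epsilon=(\epsilon_s)\in[0,1]^K$; $[\![L]\!]=\{-L,\dots,L\}$, $r_\ell(x)=(\eta(x)-\ell B/L)^2$. For a prediction $\pi$ supported on the grid $\{\ell B/L:\ell\in[\![L]\!]\}$ (i.e. a Markov kernel with $\pi(\ell\mid x)$ the mass at $\ell B/L$), $\mathcal U_s(\pi,\ell)=|\mathbb E[\pi(\ell\mid X)\mid S=s]-\mathbb E[\pi(\ell\mid X)]|$. $\mathrm{LSE}_\beta(\mathbf w)=\beta^{-1}\log\sum_j e^{\beta w_j}$, $\sigma_j(\mathbf w)=e^{w_j}/\sum_ie^{w_i}$. For ${\mathbf\Lambda}=(\lambda_{\ell s}),{\mathbf V}=(\nu_{\ell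 s})$ with rows $\boldsymbol\lambda_\ell,\boldsymbol\nu_\ell\in\mathbb R^K$: $F({\mathbf\Lambda},{\mathbf V})=\mathbb E\big[\mathrm{LSE}_\beta\big((\langle\boldsymbol\lambda_\ell-\boldsymbol\nu_\ell,\mathbf t(X)\rangle-r_\ell(X))_{\ell\in[\![L]\!]}\big)\big]+\sum_{\ell}\langle\boldsymbol\lambda_\ell+\boldsymbol\nu_\ell,\boldsymbol\epsilon\rangle$, and $\pi_{{\mathbf\Lambda},{\mathbf V}}(\ell\mid x)=\sigma_\ell\big(\beta(\langle\boldsymbol\lambda_{\ell'}-\boldsymbol\nu_{\ell'},\mathbf t(x)\rangle-r_{\ell'}(x))_{\ell'\in[\![L]\!]}\big)$. *)

(* Defs.v *)
From HB Require Import structures.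
From mathcomp Require Import all_boot all_order all_algebra.
From mathcomp Require Import all_classical all_reals all_analysis.
Set Implicit Arguments. Unset Strict Implicit. Unset Printing Implicit Defensive.
Import Order.TTheory GRing.Theory Num.Theory.
Local Open Scope classical_set_scope.
Local Open Scope ring_scope.

Section Defs.
Context {R : realType} {dT : measure_display} {T : measurableType dT}.
Context {dV : measure_display} {V : measurableType dV}.

(* g is a version of x |-> E[Z | X = x]: g is measurable, g(X) is integrable,
   and E[Z 1_{X in A}] = E[g(X) 1_{X in A}] for every measurable A. *)
Definition is_cond_exp_fun (P : probability T R) (X : T -> V) (Z : T -> R)
  (g : V -> R) : Prop :=
  measurable_fun setT g /\
  P.-integrable setT (fun w => (g (X w))%:E) /\
  forall A : set V, measurable A ->
    (\int[P]_(w in X @^-1` A) (Z w)%:E = \int[P]_(w in X @^-1` A) (g (X w))%:E)%E.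

End Defs.

Section Fair.
Context {R : realType}.

Definition ind_eq (K : nat) (s : 'I_K) (k : 'I_K) : R := (k == s)%:R.

(* grid point  l B / L  for the index  i : 'I_(2L+1)  with  l = i - L *)
Definition grid (L : nat) (B : R) (i : 'I_(2 * L + 1)) : R :=
  ((i%:R - L%:R) * B) / L%:R.

Definition rloss (X : Type) (eta : X -> R) (L : nat) (B : R)
  (i : 'I_(2 * L + 1)) (x : X) : R := (eta x - grid B i) ^+ 2.

Definition tfun (X : Type) (K : nat) (tau : 'I_K -> X -> R) (p : 'I_K -> R)
  (s : 'I_K) (x : X) : R := 1 - tau s x / p s.

Definition score (X : Type) (K L : nat) (eta : X -> R) (B : R)
  (tau : 'I_K -> X -> R) (p : 'I_K -> R)
  (Lam Nu : 'M[R]_(2 * L + 1, K)) (x : X) (i : 'I_(2 * L + 1)) : R :=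
  \sum_(s < K) (Lam i s - Nu i s) * tfun tau p s x - rloss eta B i x.

Definition LSE (n : nat) (beta : R) (w : 'I_n -> R) : R :=
  beta^-1 * ln (\sum_(j < n) expR (beta * w j)).

Definition softmax (n : nat) (w : 'I_n -> R) (j : 'I_n) : R :=
  expR (w j) / \sum_(i < n) expR (w i).

Definition pi_LV (X : Type) (K L : nat) (eta : X -> R) (B beta : R)
  (tau : 'I_K -> X -> R) (p : 'I_K -> R)
  (Lam Nu : 'M[R]_(2 * L + 1, K)) (x : X) (i : 'I_(2 * L + 1)) : R :=
  softmax (fun j => beta * score eta B tau p Lam Nu x j) i.

Definition nonneg_mx (m n : nat) (M : 'M[R]_(m, n)) : Prop :=
  forall i j, 0 <= M i j.

End Fair.

Section Prob.
Context {R : realType} {d : measure_display} {T : measurableType d}.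

Definition pS (P : probability T R) (K : nat) (S : T -> 'I_K) (s : 'I_K) : R :=
  fine (P [set w | S w = s]).

Definition Fobj (P : probability T R) (n : nat) (X : T -> n.-tuple R)
  (K L : nat) (S : T -> 'I_K) (eta : n.-tuple R -> R) (B beta : R)
  (tau : 'I_K -> n.-tuple R -> R) (eps : 'I_K -> R)
  (Lam Nu : 'M[R]_(2 * L + 1, K)) : \bar R :=
  (\int[P]_w (LSE beta (score eta B tau (pS P S) Lam Nu (X w)))%:E
   + (\sum_(i < 2 * L + 1) \sum_(s < K) (Lam i s + Nu i s) * eps s)%:E)%E.

Definition Ufair (P : probability T R) (n : nat) (X : T -> n.-tuple R)
  (K : nat) (S : T -> 'I_K) (g : n.-tuple R -> R) (s : 'I_K) : \bar R :=
  (`| (\int[P]_(w in [set w | S w = s]) (g (X w))%:E) * ((pS P S s)^-1)%:E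
       - \int[P]_w (g (X w))%:E |)%E.

End Prob.

(* Main.v *)
Require Import Defs.
From HB Require Import structures.
From mathcomp Require Import all_boot all_order all_algebra.
From mathcomp Require Import all_classical all_reals all_analysis.
From mathcomp Require Import measurable_realfun.
From mathcomp Require Import ring lra zify.
Import Order.TTheory GRing.Theory Num.Theory.
Import numFieldNormedType.Exports.
Import HBNNSimple.
Local Open Scope classical_set_scope.
Local Open Scope ring_scope.

Section transfer.
Context {R : realType} {d : measure_display} {T : measurableType d}.
Context {dV : measure_display} {V : measurableType dV}.
Variables (P : probability T R) (X : T -> V) (mX : measurable_fun setT X).

Lemma mpreX {B : set V} : measurable B -> measurable (X @^-1` B).
Proof. by move=> mB; rewrite -[X @^-1` B]setTI; exact: mX. Qed.

Lemma L0 (f : T -> R) (If : P.-integrable setT (EFin \o f)) (B : set V)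
  (mB : measurable B) (c : R) :
  (\int[P]_w (f w * (c * \1_B (X w)))%:E =
   c%:E * \int[P]_(w in X @^-1` B) (f w)%:E)%E.
Proof.
have mXB := mpreX mB.
rewrite (integral_mkcond (X @^-1` B)) -integralZl //; last first.
  apply/(integrable_mkcond _ mXB).1; exact: integrableS If.
apply: eq_integral => w _; rewrite /restrict indicE.
have -> : (w \in X @^-1` B) = (X w \in B).
  by apply/idP/idP => /set_mem H; apply/mem_set.
case: (X w \in B).
  by rewrite mulr1 EFinM muleC.
by rewrite mulr0 mulr0 mule0.
Qed.

Lemma int_meas (f : T -> R) : P.-integrable setT (EFin \o f) ->
  measurable_fun setT f.
Proof. by move=> /measurable_int/measurable_EFinP. Qed.

Lemma intMbd (f g : T -> R) (M : R) : P.-integrable setT (EFin \o f) ->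
  measurable_fun setT g -> (forall w, `|g w| <= M) ->
  P.-integrable setT (fun w => (f w * g w)%:E).
Proof.
move=> If mg gM.
apply: (@le_integrable _ _ _ P setT measurableT _ (fun w => (M%:E * (f w)%:E)%E)) => //.
- apply/measurable_EFinP; apply: measurable_funM => //; exact: int_meas.
- move=> w _; rewrite -EFinM !abse_EFin lee_fin !normrM mulrC.
  rewrite ler_wpM2r //; apply: le_trans (gM w) _; exact: ler_norm.
- exact: integrableZl.
Qed.

Lemma L1 (f1 f2 : T -> R) :
  P.-integrable setT (EFin \o f1) -> P.-integrable setT (EFin \o f2) ->
  (forall A, measurable A ->
     \int[P]_(w in X @^-1` A) (f1 w)%:E = \int[P]_(w in X @^-1` A) (f2 w)%:E)%E ->
  forall phi : {nnsfun V >-> R},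
  (\int[P]_w (f1 w * phi (X w))%:E = \int[P]_w (f2 w * phi (X w))%:E)%E.
Proof.
move=> I1 I2 H phi.
have mphi r : measurable (phi @^-1` [set r]) by exact: measurable_funPTI.
pose s := finmap.enum_fset (fset_set (range phi)).
have E (f : T -> R) w : ((f w * phi (X w))%:E =
   \sum_(i < size s) (f w * (s`_i * \1_(phi @^-1` [set s`_i]) (X w)))%:E)%E.
  by rewrite sumEFin -mulr_sumr -fimfunEord.
have Ii (f : T -> R) (i : 'I_(size s)) : P.-integrable setT (EFin \o f) ->
    P.-integrable setT (fun w => (f w * (s`_i * \1_(phi @^-1` [set s`_i]) (X w)))%:E).
  move=> If; apply: (@intMbd _ _ `|s`_i|) => //.
  - apply: measurable_funM; first exact: measurable_cst.
    apply: measurableT_comp => //; exact: measurable_indic.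
  - move=> w; rewrite normrM indicE.
    by case: (_ \in _); rewrite ?normr1 ?normr0 ?mulr1 ?mulr0.
under eq_integral do rewrite E.
rewrite integral_sum //; last by move=> i; exact: Ii.
under [RHS]eq_integral do rewrite E.
rewrite integral_sum //; last by move=> i; exact: Ii.
apply: eq_bigr => i _.
by rewrite !L0 // H.
Qed.

Lemma L2 (f1 f2 : T -> R) :
  P.-integrable setT (EFin \o f1) -> P.-integrable setT (EFin \o f2) ->
  (forall A, measurable A ->
     \int[P]_(w in X @^-1` A) (f1 w)%:E = \int[P]_(w in X @^-1` A) (f2 w)%:E)%E ->
  forall (h : V -> R) (M : R), measurable_fun setT h ->
  (forall x, 0 <= h x) -> (forall x, h x <= M) ->
  (\int[P]_w (f1 w * h (X w))%:E = \int[P]_w (f2 w * h (X w))%:E)%E.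
Proof.
move=> I1 I2 H h M mh h0 hM.
have mh' : measurable_fun setT (EFin \o h) by exact/measurable_EFinP.
pose phi := nnsfun_approx measurableT mh'.
have h0' : forall x, [set: V] x -> (0 <= (EFin \o h) x)%E.
  by move=> x _; rewrite lee_fin.
have cv (f : T -> R) : P.-integrable setT (EFin \o f) ->
   (\int[P]_w (f w * phi n (X w))%:E)%E @[n --> \oo] -->
   (\int[P]_w (f w * h (X w))%:E)%E.
  move=> If.
  apply: (@dominated_cvg _ _ _ P setT measurableT _ _
     (fun w => (`|f w| * M)%:E)).
  - move=> n; apply/measurable_EFinP; apply: measurable_funM.
      exact: int_meas.
    by apply: measurableT_comp => //.
  - move=> w _; apply: cvg_EFin; first exact: nearW.
    apply: cvgMr.
    have := cvg_nnsfun_approx measurableT mh' h0' (I : setT (X w)).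
    by move/fine_cvg.
  - by [].
  - apply: (@eq_integrable _ _ _ P setT measurableT (fun w => (M%:E * (abse \o (EFin \o f)) w)%E)) => //.
      by move=> w _ /=; rewrite -EFinM mulrC.
    by apply: integrableZl => //; exact: integrable_abse.
  - move=> n w _; rewrite abse_EFin lee_fin normrM ler_wpM2l //.
    rewrite ger0_norm; last exact: fun_ge0.
    have := @le_approx _ _ _ setT _ n (X w) h0' I.
    by rewrite -nnsfun_approxE lee_fin => /le_trans; apply.
have e n : (\int[P]_w (f1 w * phi n (X w))%:E = \int[P]_w (f2 w * phi n (X w))%:E)%E.
  exact: L1.
apply: (cvg_unique _ (cv _ I1)); first exact: ereal_hausdorff.
rewrite /=.
have -> : (fun n => \int[P]_w (f1 w * phi n (X w))%:E)%E =
          (fun n => \int[P]_w (f2 w * phi n (X w))%:E)%E.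
  by apply/funext => n; exact: e.
exact: cv.
Qed.

Lemma L3 (f1 f2 : T -> R) :
  P.-integrable setT (EFin \o f1) -> P.-integrable setT (EFin \o f2) ->
  (forall A, measurable A ->
     \int[P]_(w in X @^-1` A) (f1 w)%:E = \int[P]_(w in X @^-1` A) (f2 w)%:E)%E ->
  forall (h : V -> R) (M : R), measurable_fun setT h ->
  (forall x, `|h x| <= M) ->
  (\int[P]_w (f1 w * h (X w))%:E = \int[P]_w (f2 w * h (X w))%:E)%E.
Proof.
move=> I1 I2 H h M mh hM.
have M0 : 0 <= M by apply: le_trans (hM point); exact: normr_ge0.
pose hp x := h x + M.
have mhp : measurable_fun setT hp by apply: measurable_funD.
have hp0 x : 0 <= hp x.
  rewrite /hp -lerBlDr sub0r; have := hM x; rewrite ler_norml.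
  by case/andP.
have hpM x : hp x <= M + M.
  by rewrite /hp lerD2r; apply: le_trans (hM x); exact: ler_norm.
have dec (f : T -> R) : P.-integrable setT (EFin \o f) ->
   (\int[P]_w (f w * h (X w))%:E = \int[P]_w (f w * hp (X w))%:E
       - \int[P]_w (f w * cst M (X w))%:E)%E.
  move=> If; rewrite -integralB //.
  - apply: eq_integral => w _ /=; rewrite -EFinB /hp; congr EFin.
    by rewrite mulrDr addrK.
  - apply: (@intMbd _ _ (M + M)) => //.
      by apply: measurableT_comp => //.
    by move=> w; rewrite ger0_norm.
  - apply: (@intMbd _ _ M) => //.
    by move=> w /=; rewrite ger0_norm.
rewrite (dec _ I1) (dec _ I2).
rewrite (@L2 f1 f2 I1 I2 H hp (M + M)) //.
by rewrite (@L2 f1 f2 I1 I2 H (cst M) M).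
Qed.

Lemma L4 (Z : T -> R) (g : V -> R) : measurable_fun setT Z ->
  P.-integrable setT (fun w => (Z w ^+ 2)%:E) -> is_cond_exp_fun P X Z g ->
  P.-integrable setT (EFin \o Z) /\
  P.-integrable setT (fun w => (g (X w) ^+ 2)%:E).
Proof.
move=> mZ IZ2 [mg [Ig H]].
have IZ : P.-integrable setT (EFin \o Z).
  apply: (@le_integrable _ _ _ P setT measurableT _ (fun w => (Z w ^+ 2 + 1)%:E)).
  - exact/measurable_EFinP.
  - move=> w _; rewrite /= lee_fin.
    have n0 := normr_ge0 (Z w).
    rewrite [X in _ <= X]ger0_norm; last by rewrite addr_ge0 // sqr_ge0.
    rewrite -real_normK ?num_real //. nra.
  - apply: (@eq_integrable _ _ _ P setT measurableT
      ((fun w => (Z w ^+ 2)%:E) \+ (EFin \o cst 1%R))%E) => //.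
    apply: integrableD => //; exact: finite_measure_integrable_cst.
split => //.
have mgX : measurable_fun setT (fun w => g (X w)) by apply: measurableT_comp.
pose c (m : nat) x := g x * \1_([set y | `|g y| <= m%:R]) x.
have mB (m : nat) : measurable [set y | `|g y| <= m%:R].
  rewrite -[X in measurable X]setTI.
  apply: measurable_fun_le => //.
  by apply: measurableT_comp => //; exact: normr_measurable.
have mc m : measurable_fun setT (c m).
  by apply: measurable_funM => //; exact: measurable_indic.
have cM m x : `|c m x| <= m%:R.
  rewrite /c indicE; case: (boolP (x \in _)) => [/set_mem /= gm|_].
    by rewrite mulr1.
  by rewrite mulr0 normr0.
have gc m x : g x * c m x = c m x ^+ 2.
  rewrite /c indicE; case: (_ \in _); by rewrite ?mulr1 ?mulr0 expr2 ?mulr0.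
have Igc m : P.-integrable setT (fun w => (g (X w) * c m (X w))%:E).
  apply: (@intMbd _ _ m%:R) => //.
  exact: (measurableT_comp (mc m) mX).
have Ic2 m : P.-integrable setT (fun w => (c m (X w) ^+ 2)%:E).
  apply: (@eq_integrable _ _ _ P setT measurableT
    (fun w => (g (X w) * c m (X w))%:E)); last exact: Igc.
  by move=> w _; rewrite /= gc.
have bd m : (\int[P]_w (c m (X w) ^+ 2)%:E <= \int[P]_w (Z w ^+ 2)%:E)%E.
  have IZc : P.-integrable setT (fun w => (Z w * c m (X w))%:E).
    apply: (@intMbd _ _ m%:R) => //.
    exact: (measurableT_comp (mc m) mX).
  have e1 : (\int[P]_w (c m (X w) ^+ 2)%:E = \int[P]_w (Z w * c m (X w))%:E)%E.
    rewrite (@L3 Z (fun w => g (X w)) IZ Ig H (c m) m%:R) //.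
    by apply: eq_integral => w _; rewrite gc.
  have e2 : (2%:E * \int[P]_w (Z w * c m (X w))%:E <=
             \int[P]_w (Z w ^+ 2)%:E + \int[P]_w (c m (X w) ^+ 2)%:E)%E.
    rewrite -integralZl // -integralD //.
    apply: le_integral => //.
    - exact: integrableZl.
    - exact: integrableD.
    - move=> w _; rewrite -EFinM -EFinD lee_fin.
      have := sqr_ge0 (Z w - c m (X w)); nra.
  move: e2; rewrite -e1.
  have f1 := integrable_fin_num measurableT (Ic2 m).
  have f2 := integrable_fin_num measurableT IZ2.
  rewrite -(fineK f1) -(fineK f2) -EFinM -EFinD !lee_fin.
  lra.
apply/integrableP; split.
  by apply/measurable_EFinP; apply: measurable_funX.
have -> : (\int[P]_w `|(g (X w) ^+ 2)%:E| =
   \int[P]_w (fun w => limn (fun m => (c m (X w) ^+ 2)%:E)) w)%E.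
  apply: eq_integral => w _ /=; rewrite ger0_norm ?sqr_ge0 //.
  apply/esym; apply: lim_near_cst => //.
  exists (Num.truncn `|g (X w)|).+1 => // m /= Hm.
  congr EFin; rewrite -gc /c indicE mem_set ?mulr1 //=.
  apply: ltW; apply: lt_le_trans (truncnS_gt _) _.
  by rewrite ler_nat.
apply: (@le_lt_trans _ _ (\int[P]_w (Z w ^+ 2)%:E)%E); last first.
  by apply: integrable_lty.
apply: (cvge_to_le (cvg_monotone_convergence _ _ _ _)) => //.
- move=> m; apply/measurable_EFinP; apply: measurable_funX.
  exact: measurableT_comp.
- by move=> m w _; rewrite lee_fin sqr_ge0.
- move=> w _ n m nm; rewrite lee_fin -!gc /c !indicE.
  case: (boolP (X w \in [set y | `|g y| <= m%:R])) => Hm.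
    case: (boolP (X w \in [set y | `|g y| <= n%:R])) => Hn.
      by rewrite !mulr1.
    by rewrite !mulr0 mulr1 -expr2 sqr_ge0.
  case: (boolP (X w \in [set y | `|g y| <= n%:R])) => Hn.
    exfalso; move: Hm => /negP; apply; apply/mem_set.
    move/set_mem: Hn => /= Hn; apply: le_trans Hn _; by rewrite ler_nat.
  by rewrite !mulr0.
- exact: nearW.
Qed.

End transfer.


Section realfacts.
Context {R : realType}.

Lemma expR_1m (x : R) : expR x * (1 - x) <= 1.
Proof.
have h1 := expR_ge1Dx (- x).
have e : expR x * expR (- x) = 1 by rewrite -expRD subrr expR0.
have p := expR_gt0 x.
rewrite -[X in _ <= X]e ler_wpM2l ?(ltW p) //.
Qed.

Lemma exp_le (a : R) : a <= 1 -> expR a <= 1 + a + 4 * a ^+ 2.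
Proof.
move=> a1.
have [a0|a0] := lerP a 0.
  have h := expR_1m a; set E := expR a in h *.
  have q : 0 < 1 - a by lra.
  rewrite -(ler_pM2r q); apply: le_trans h _.
  have : 0 <= a ^+ 2 * (3 - 4 * a) by apply: mulr_ge0; [exact: sqr_ge0|lra].
  move=> ?; nra.
pose b := a / 2.
have ab : a = b + b by rewrite /b; field.
have h := expR_1m b; set F := expR b in h *.
have F0 : 0 < F := expR_gt0 b.
have eF : expR a = F ^+ 2 by rewrite ab expRD expr2.
rewrite eF ab.
have b0 : 0 < b by rewrite /b; lra.
have b1 : b <= 1 / 2 by rewrite /b; lra.
have q : 0 < (1 - b) ^+ 2 by apply: exprn_gt0; lra.
rewrite -(ler_pM2r q).
have h2 : (F * (1 - b)) ^+ 2 <= 1.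
  have : 0 <= F * (1 - b) by apply: mulr_ge0; lra.
  move=> ?; nra.
apply: le_trans (_ : 1 <= _).
  by rewrite -exprMn.
have : 0 <= b ^+ 2 * (13 - 30 * b + 16 * b ^+ 2).
  apply: mulr_ge0; first exact: sqr_ge0.
  nra.
move=> ?; nra.
Qed.

Lemma ln_bound (p a : R) : 0 <= p -> p <= 1 ->
  ln (1 + p * (expR a - 1)) <= p * a + 4 * a ^+ 2.
Proof.
move=> p0 p1.
have E0 := expR_gt0 a.
have pos : 0 < 1 + p * (expR a - 1).
  have [->|pn1] := eqVneq p 1; first by rewrite mul1r addrC subrK.
  have : p < 1 by rewrite lt_neqAle pn1 p1.
  move=> ?; nra.
have [a1|a1] := lerP a 1.
  apply: le_trans (le_ln1Dx _) _; first lra.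
  have := @exp_le a a1; have := sqr_ge0 a.
  move=> ? ?; nra.
have ea : 1 <= expR a by rewrite -expR0 ler_expR; lra.
apply: (@le_trans _ _ a).
  rewrite -{2}(expRK a) ler_ln ?posrE //; nra.
nra.
Qed.

Lemma sum_exp_gt0 {N : nat} (w : 'I_N -> R) (i : 'I_N) :
  0 < \sum_(j < N) expR (w j).
Proof.
rewrite (bigD1 i) //=; apply: lt_le_trans (expR_gt0 (w i)) _.
rewrite lerDl; apply: sumr_ge0 => j _; exact: expR_ge0.
Qed.

Lemma softmax_ge0 {N : nat} (w : 'I_N -> R) (i : 'I_N) : 0 <= softmax w i.
Proof.
rewrite /softmax; apply: divr_ge0; first exact: expR_ge0.
exact: (ltW (sum_exp_gt0 w i)).
Qed.

Lemma softmax_le1 {N : nat} (w : 'I_N -> R) (i : 'I_N) : softmax w i <= 1.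
Proof.
rewrite /softmax ler_pdivrMr ?mul1r; last exact: sum_exp_gt0 w i.
rewrite (bigD1 i) //= lerDl; apply: sumr_ge0 => j _; exact: expR_ge0.
Qed.

Lemma LSE_pert {N : nat} (beta : R) (u : 'I_N -> R) (i : 'I_N) (dl : R) :
  0 < beta ->
  LSE beta (fun j => u j + (j == i)%:R * dl) <=
  LSE beta u + softmax (fun j => beta * u j) i * dl + 4 * beta * dl ^+ 2.
Proof.
move=> b0.
set Sm := \sum_(j < N) expR (beta * u j).
have S0 : 0 < Sm := sum_exp_gt0 (fun j => beta * u j) i.
set p := softmax (fun j => beta * u j) i.
have p0 : 0 <= p := softmax_ge0 _ i.
have p1 : p <= 1 := softmax_le1 _ i.
have pE : p * Sm = expR (beta * u i).
  by rewrite /p /softmax -/Sm mulrVK // unitfE gt_eqF.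
set q := 1 + p * (expR (beta * dl) - 1).
have q0 : 0 < q.
  rewrite /q; have E0 := expR_gt0 (beta * dl).
  have [->|pn1] := eqVneq p 1; first by rewrite mul1r addrC subrK.
  have : p < 1 by rewrite lt_neqAle pn1 p1.
  move=> ?; nra.
have eS1 : \sum_(j < N) expR (beta * (u j + (j == i)%:R * dl)) =
    Sm + expR (beta * u i) * (expR (beta * dl) - 1).
  rewrite /Sm (bigD1 i) //= [in RHS](bigD1 i) //= eqxx mul1r.
  rewrite (eq_bigr (fun j => expR (beta * u j))); last first.
    by move=> j /negbTE ->; rewrite mul0r addr0.
  rewrite mulrDr expRD; ring.
have eS : \sum_(j < N) expR (beta * (u j + (j == i)%:R * dl)) = Sm * q.
  by rewrite eS1 /q -pE; ring.
rewrite /LSE eS lnM ?posrE //.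
rewrite mulrDr -addrA lerD2l.
have := ln_bound p (beta * dl) p0 p1; rewrite -/q => hq.
rewrite -(ler_pM2l b0) mulrA mulfV ?gt_eqF // mul1r.
apply: le_trans hq _.
rewrite mulrDr; apply: lerD; first by rewrite mulrCA.
by have -> : 4 * (beta * dl) ^+ 2 = beta * (4 * beta * dl ^+ 2) by ring.
Qed.

Lemma LSE_abs {N : nat} (beta : R) (u : 'I_N -> R) (i : 'I_N) :
  0 < beta -> `|LSE beta u| <= \sum_(j < N) `|u j| + ln N%:R / beta.
Proof.
move=> b0.
set A := \sum_(j < N) `|u j|.
have uA j : `|u j| <= A.
  by rewrite /A (bigD1 j) //= lerDl; apply: sumr_ge0 => k _; exact: normr_ge0.
set Sm := \sum_(j < N) expR (beta * u j).
have S0 : 0 < Sm := sum_exp_gt0 (fun j => beta * u j) i.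
have N1 : (0 < N)%N := leq_ltn_trans (leq0n i) (ltn_ord i).
have lnN : 0 <= ln (N%:R : R) by rewrite ln_ge0 // ler1n.
have lo : beta * u i <= ln Sm.
  rewrite -{1}(expRK (beta * u i)) ler_ln ?posrE ?expR_gt0 //.
  rewrite /Sm (bigD1 i) //= lerDl; apply: sumr_ge0 => j _; exact: expR_ge0.
have hi : ln Sm <= ln N%:R + beta * A.
  rewrite -[X in _ <= X]expRK ler_ln ?posrE ?expR_gt0 //.
  rewrite expRD lnK ?posrE ?ltr0n //.
  apply: le_trans (_ : \sum_(j < N) expR (beta * A) <= _).
    apply: ler_sum => j _; rewrite ler_expR ler_pM2l //.
    apply: le_trans (uA j); exact: ler_norm.
  by rewrite sumr_const card_ord mulr_natl.
have ui : - A <= u i by rewrite lerNl; apply: le_trans (uA i); rewrite -normrN; exact: ler_norm.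
rewrite /LSE -/Sm ler_norml; apply/andP; split.
  rewrite ler_pdivlMl //.
  have : 0 <= ln (N%:R : R) / beta by apply: divr_ge0 => //; exact: ltW.
  move=> ?; nra.
rewrite ler_pdivrMl //.
rewrite mulrDr mulrCA mulfV ?gt_eqF // mulr1.
lra.
Qed.

End realfacts.


Section main.
Context {R : realType} {dT : measure_display} {T : measurableType dT}.
Variables (P : probability T R) (K n : nat) (X : T -> n.-tuple R)
  (S : T -> 'I_K) (Y : T -> R) (eta : n.-tuple R -> R)
  (tau : 'I_K -> n.-tuple R -> R) (B : R) (L : nat) (beta : R)
  (eps : 'I_K -> R).
Variables (mX : measurable_fun setT X)
  (mS : forall s, measurable [set w | S w = s])
  (mY : measurable_fun setT Y)
  (IY2 : P.-integrable setT (fun w => (Y w ^+ 2)%:E))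
  (ceY : is_cond_exp_fun P X Y eta)
  (ceS : forall s, is_cond_exp_fun P X (fun w => ind_eq s (S w)) (tau s))
  (PS0 : forall s, (0 < P [set w | S w = s])%E) (b0 : 0 < beta).

Local Notation p := (pS P S).

Lemma p_gt0 s : 0 < p s.
Proof.
apply: fine_gt0; rewrite PS0 /=.
by apply: le_lt_trans (probability_le1 P (mS s)) _; rewrite ltry.
Qed.

Lemma ind_eqE s : (fun w => ind_eq s (S w) : R) = \1_[set w | S w = s].
Proof.
apply/funext => w; rewrite /ind_eq indicE.
have -> : (w \in [set w | S w = s]) = (S w == s) => //.
by apply/idP/idP => [/set_mem ->//|/eqP H]; exact/mem_set.
Qed.

Lemma mind s : measurable_fun setT (fun w => ind_eq s (S w) : R).
Proof. by rewrite ind_eqE; exact: measurable_indic. Qed.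

Lemma ind_bd s w : `|ind_eq s (S w) : R| <= 1.
Proof. by rewrite /ind_eq; case: (_ == _); rewrite ?normr1 ?normr0. Qed.

Lemma int_cst (c : R) : P.-integrable setT (EFin \o cst c).
Proof. exact: finite_measure_integrable_cst. Qed.

Lemma IetaX : P.-integrable setT (EFin \o (fun w => eta (X w))) /\
  P.-integrable setT (EFin \o (fun w => eta (X w) ^+ 2)).
Proof.
have [_ h] := L4 P X mX Y eta mY IY2 ceY.
by split => //; case: ceY => _ [].
Qed.

Lemma ItauX s : P.-integrable setT (EFin \o (fun w => tau s (X w))) /\
  P.-integrable setT (EFin \o (fun w => tau s (X w) ^+ 2)).
Proof.
have I2 : P.-integrable setT (fun w => (ind_eq s (S w) ^+ 2)%:E).
  apply: (@le_integrable _ _ _ P setT measurableT _ (EFin \o cst 1)).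
  - by apply/measurable_EFinP; apply: measurable_funX; exact: mind.
  - move=> w _; rewrite /= lee_fin normr1 normrX.
    by apply: exprn_ile1 => //; exact: ind_bd.
  - exact: int_cst.
have [_ h] := L4 P X mX _ (tau s) (mind s) I2 (ceS s).
by split => //; case: (ceS s) => _ [].
Qed.

Let meta : measurable_fun setT eta. Proof. by case: ceY. Qed.
Let mtau s : measurable_fun setT (tau s). Proof. by case: (ceS s). Qed.

Lemma mt s : measurable_fun setT (tfun tau p s).
Proof.
apply: measurable_funB => //; apply: measurable_funM => //.
Qed.

Lemma mr (j : 'I_(2 * L + 1)) : measurable_fun setT (rloss eta B j).
Proof. by apply: measurable_funX; apply: measurable_funB. Qed.

Lemma mscore (Lam Nu : 'M[R]_(2 * L + 1, K)) j :
  measurable_fun setT (fun x => score eta B tau p Lam Nu x j).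
Proof.
apply: measurable_funB; last exact: mr.
apply: measurable_sum => k; apply: measurable_funM => //; exact: mt.
Qed.

Lemma mLSE (Lam Nu : 'M[R]_(2 * L + 1, K)) :
  measurable_fun setT (fun x => LSE beta (score eta B tau p Lam Nu x)).
Proof.
apply: measurable_funM => //; apply: measurableT_comp; first exact: measurable_ln.
apply: measurable_sum => j; apply: measurableT_comp; first exact: measurable_expR.
apply: measurable_funM => //; exact: mscore.
Qed.

Lemma mpi (Lam Nu : 'M[R]_(2 * L + 1, K)) i :
  measurable_fun setT (fun x => pi_LV eta B beta tau p Lam Nu x i).
Proof.
have e : (fun x => pi_LV eta B beta tau p Lam Nu x i) =
  (fun x => expR (beta * score eta B tau p Lam Nu x i -
     ln (\sum_(j < 2 * L + 1) expR (beta * score eta B tau p Lam Nu x j)))).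
  apply/funext => x; rewrite /pi_LV /softmax expRD expRN lnK //.
  rewrite posrE; exact: (sum_exp_gt0 _ i).
rewrite e; apply: measurableT_comp; first exact: measurable_expR.
apply: measurable_funB.
  apply: measurable_funM => //; exact: mscore.
apply: measurableT_comp; first exact: measurable_ln.
apply: measurable_sum => j; apply: measurableT_comp; first exact: measurable_expR.
apply: measurable_funM => //; exact: mscore.
Qed.

Local Notation Int f := (P.-integrable setT (EFin \o f)).

Lemma IntD' {f g : T -> R} : Int f -> Int g -> Int (fun w => f w + g w).
Proof.
move=> If Ig; apply: (@eq_integrable _ _ _ P setT measurableT
  ((EFin \o f) \+ (EFin \o g))%E); last exact: integrableD.
by move=> w _ /=; rewrite EFinD.
Qed.

Lemma IntZ' (k : R) {f : T -> R} : Int f -> Int (fun w => k * f w).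
Proof.
move=> If; apply: (@eq_integrable _ _ _ P setT measurableT
  (fun w => k%:E * (EFin \o f) w)%E); last exact: integrableZl.
by move=> w _ /=; rewrite EFinM.
Qed.

Lemma IntB' {f g : T -> R} : Int f -> Int g -> Int (fun w => f w - g w).
Proof.
move=> If Ig; apply: (@eq_integrable _ _ _ P setT measurableT
  (EFin \o (fun w => f w + (-1) * g w))); last by apply: IntD' => //; exact: IntZ'.
by move=> w _ /=; rewrite mulN1r.
Qed.

Lemma Int_sum' (m : nat) (F : 'I_m -> T -> R) : (forall k, Int (F k)) ->
  Int (fun w => \sum_(k < m) F k w).
Proof.
move=> IF; apply: (@eq_integrable _ _ _ P setT measurableT
  (fun w => \sum_(k < m) (EFin \o F k) w)%E); last exact: integrable_sum.
by move=> w _ /=; rewrite sumEFin.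
Qed.

Lemma Int_abs {f : T -> R} : Int f -> Int (fun w => `|f w|).
Proof.
move=> If; apply: (@eq_integrable _ _ _ P setT measurableT
  (abse \o (EFin \o f))); last exact: integrable_abse.
by [].
Qed.

Lemma Int_le (f g : T -> R) : measurable_fun setT f ->
  (forall w, `|f w| <= g w) -> Int g -> Int f.
Proof.
move=> mf fg Ig; apply: (@le_integrable _ _ _ P setT measurableT _ (EFin \o g)).
- exact/measurable_EFinP.
- move=> w _ /=; rewrite lee_fin; apply: le_trans (fg w) _; exact: ler_norm.
- exact: Ig.
Qed.

Lemma It s : Int (fun w => tfun tau p s (X w)).
Proof.
apply: (@eq_integrable _ _ _ P setT measurableT
  (EFin \o (fun w => 1 - (p s)^-1 * tau s (X w)))); last first.
  apply: IntB'; first exact: int_cst.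
  by apply: IntZ'; case: (ItauX s).
by move=> w _ /=; rewrite /tfun mulrC.
Qed.

Lemma It2 s : Int (fun w => tfun tau p s (X w) ^+ 2).
Proof.
apply: (@Int_le _ (fun w => 2 + (2 * (p s)^-1 ^+ 2) * tau s (X w) ^+ 2)).
- apply: measurable_funX; apply: measurableT_comp => //; exact: mt.
- move=> w; rewrite ger0_norm ?sqr_ge0 // /tfun.
  set a := tau s (X w) / p s.
  have -> : 2 * (p s)^-1 ^+ 2 * tau s (X w) ^+ 2 = 2 * a ^+ 2.
    by rewrite /a; ring.
  have := sqr_ge0 (1 + a); nra.
- apply: IntD'; first exact: int_cst.
  by apply: IntZ'; case: (ItauX s).
Qed.

Lemma grid_bd (j : 'I_(2 * L + 1)) : (0 < L)%N -> 0 <= B -> `|grid B j| <= B.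
Proof.
move=> L0 B0; rewrite /grid normrM normfV normrM (ger0_norm B0).
rewrite [`|L%:R|]ger0_norm ?ler0n // ler_pdivrMr ?ltr0n //.
rewrite [B * _]mulrC ler_wpM2r //.
have jL : (j < 2 * L + 1)%N := ltn_ord j.
have [jle|jgt] := leqP j L.
  by rewrite distrC -natrB // normr_nat ler_nat leq_subr.
rewrite -natrB ?(ltnW jgt) // normr_nat ler_nat leq_subLR.
lia.
Qed.

Lemma Ir (j : 'I_(2 * L + 1)) : Int (fun w => rloss eta B j (X w)).
Proof.
have [Ie Ie2] := IetaX.
apply: (@Int_le _ (fun w => 2 * eta (X w) ^+ 2 + 2 * grid B j ^+ 2)).
- apply: measurableT_comp => //; exact: mr.
- move=> w; rewrite ger0_norm ?sqr_ge0 // /rloss.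
  have := sqr_ge0 (eta (X w) + grid B j); nra.
- apply: IntD'; first exact: IntZ'.
  exact: int_cst.
Qed.

Lemma ILSE (Lam Nu : 'M[R]_(2 * L + 1, K)) :
  Int (fun w => LSE beta (score eta B tau p Lam Nu (X w))).
Proof.
pose i0 : 'I_(2 * L + 1) := @Ordinal (2 * L + 1) 0 ltac:(by rewrite addn1).
apply: (@Int_le _ (fun w => \sum_(j < 2 * L + 1)
   (\sum_(k < K) `|Lam j k - Nu j k| * `|tfun tau p k (X w)|
    + rloss eta B j (X w)) + ln (2 * L + 1)%:R / beta)).
- exact: (measurableT_comp (mLSE Lam Nu) mX).
- move=> w; apply: le_trans (LSE_abs beta _ i0 b0) _.
  rewrite lerD2r; apply: ler_sum => j _.
  rewrite /score; apply: le_trans (ler_normB _ _) _.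
  apply: lerD.
    apply: le_trans (ler_norm_sum _ _ _) _.
    by apply: ler_sum => k _; rewrite normrM.
  by rewrite ger0_norm // /rloss sqr_ge0.
- apply: IntD'; last exact: int_cst.
  apply: Int_sum' => j; apply: IntD'; last exact: Ir.
  apply: Int_sum' => k; apply: IntZ'; apply: Int_abs; exact: It.
Qed.

Lemma Ipit (Lam Nu : 'M[R]_(2 * L + 1, K)) i s :
  Int (fun w => tfun tau p s (X w) * pi_LV eta B beta tau p Lam Nu (X w) i).
Proof.
apply: (@intMbd _ _ _ P _ _ 1); first exact: It.
  exact: (measurableT_comp (mpi Lam Nu i) mX).
move=> w; rewrite ger0_norm; first exact: softmax_le1.
exact: softmax_ge0.
Qed.

Lemma IntE (f : T -> R) : Int f ->
  (\int[P]_w (f w)%:E)%E = (Rintegral P setT f)%:E.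
Proof. by move=> If; rewrite /Rintegral fineK //; exact: integrable_fin_num. Qed.

Definition Emx (i : 'I_(2 * L + 1)) (s : 'I_K) (h : R) : 'M[R]_(2 * L + 1, K) :=
  \matrix_(j, k) (((j == i) && (k == s))%:R * h).

Lemma sumE (i : 'I_(2 * L + 1)) (s : 'I_K) (h : R) j (F : 'I_K -> R) :
  \sum_(k < K) Emx i s h j k * F k = (j == i)%:R * (h * F s).
Proof.
rewrite (bigD1 s) //= big1 ?addr0.
  by rewrite /Emx mxE eqxx andbT; case: (j == i); rewrite ?mul1r ?mul0r ?mulrA.
by move=> k ks; rewrite /Emx mxE (negbTE ks) andbF mul0r mul0r.
Qed.

Lemma score_pertL Lam Nu i s h x j :
  score eta B tau p (Lam + Emx i s h) Nu x j =
  score eta B tau p Lam Nu x j + (j == i)%:R * (1 * h * tfun tau p s x).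
Proof.
rewrite /score mul1r -(sumE i s h j (fun k => tfun tau p k x)) addrAC -big_split /=; congr (_ - _).
by apply: eq_bigr => k _; rewrite mxE; ring.
Qed.

Lemma score_pertN Lam Nu i s h x j :
  score eta B tau p Lam (Nu + Emx i s h) x j =
  score eta B tau p Lam Nu x j + (j == i)%:R * (-1 * h * tfun tau p s x).
Proof.
rewrite /score mulN1r -(sumE i s (- h) j (fun k => tfun tau p k x)) addrAC -big_split /=.
congr (_ - _); apply: eq_bigr => k _; rewrite !mxE; ring.
Qed.

Definition pen (Lam Nu : 'M[R]_(2 * L + 1, K)) : R :=
  \sum_(i < 2 * L + 1) \sum_(s < K) (Lam i s + Nu i s) * eps s.

Lemma pen_pertL Lam Nu i s h : pen (Lam + Emx i s h) Nu = pen Lam Nu + h * eps s.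
Proof.
have e1 : pen (Lam + Emx i s h) Nu = \sum_(j < 2 * L + 1)
   (\sum_(k < K) (Lam j k + Nu j k) * eps k + (j == i)%:R * (h * eps s)).
  apply: eq_bigr => j _; rewrite -(sumE i s h j eps) -big_split /=.
  by apply: eq_bigr => k _; rewrite !mxE; ring.
rewrite e1 big_split /=; congr (_ + _).
rewrite (bigD1 i) //= eqxx mul1r big1 ?addr0 //.
by move=> j /negbTE ->; rewrite mul0r.
Qed.

Lemma pen_pertN Lam Nu i s h : pen Lam (Nu + Emx i s h) = pen Lam Nu + h * eps s.
Proof.
have e1 : pen Lam (Nu + Emx i s h) = \sum_(j < 2 * L + 1)
   (\sum_(k < K) (Lam j k + Nu j k) * eps k + (j == i)%:R * (h * eps s)).
  apply: eq_bigr => j _; rewrite -(sumE i s h j eps) -big_split /=.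
  by apply: eq_bigr => k _; rewrite !mxE; ring.
rewrite e1 big_split /=; congr (_ + _).
rewrite (bigD1 i) //= eqxx mul1r big1 ?addr0 //.
by move=> j /negbTE ->; rewrite mul0r.
Qed.

Lemma small (a c : R) : 0 <= c ->
  (forall h, 0 < h -> 0 <= h * a + h ^+ 2 * c) -> 0 <= a.
Proof.
move=> c0 H; rewrite leNgt; apply/negP => a0.
pose h := - a / (c + 1).
have c1 : 0 < c + 1 by lra.
have h0 : 0 < h by rewrite /h divr_gt0 // oppr_gt0.
have e : h * c + h = - a by rewrite /h; field; rewrite gt_eqF.
have := H h h0; nra.
Qed.

Lemma core (Lam Nu Lam' Nu' : 'M[R]_(2 * L + 1, K)) i s (sg h : R) :
  0 < h -> sg ^+ 2 = 1 ->
  (Fobj P X S eta B beta tau eps Lam Nu <= Fobj P X S eta B beta tau eps Lam' Nu')%E ->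
  (forall x j, score eta B tau p Lam' Nu' x j =
     score eta B tau p Lam Nu x j + (j == i)%:R * (sg * h * tfun tau p s x)) ->
  pen Lam' Nu' = pen Lam Nu + h * eps s ->
  0 <= h * (sg * Rintegral P setT (fun w => tfun tau p s (X w) *
                     pi_LV eta B beta tau p Lam Nu (X w) i) + eps s)
       + h ^+ 2 * (4 * beta * Rintegral P setT (fun w => tfun tau p s (X w) ^+ 2)).
Proof.
move=> h0 sg2 Hle Hsc Hpen.
have eF (La Nv : 'M[R]_(2 * L + 1, K)) : Fobj P X S eta B beta tau eps La Nv =
  (Rintegral P setT (fun w => LSE beta (score eta B tau p La Nv (X w))) + pen La Nv)%:E.
  by rewrite /Fobj (IntE _ (ILSE La Nv)).
move: Hle; rewrite !eF lee_fin => Hle.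
pose u := score eta B tau p Lam Nu.
have pw w : LSE beta (score eta B tau p Lam' Nu' (X w)) <=
   (LSE beta (u (X w)) + (sg * h) * (tfun tau p s (X w) *
        pi_LV eta B beta tau p Lam Nu (X w) i))
   + (4 * beta * h ^+ 2) * tfun tau p s (X w) ^+ 2.
  have -> : score eta B tau p Lam' Nu' (X w) =
      (fun j => u (X w) j + (j == i)%:R * (sg * h * tfun tau p s (X w))).
    by apply/funext => j; rewrite Hsc.
  apply: le_trans (LSE_pert _ _ _ _ b0) _.
  have -> : (sg * h * tfun tau p s (X w)) ^+ 2 = h ^+ 2 * tfun tau p s (X w) ^+ 2.
    by rewrite !exprMn sg2 mul1r.
  rewrite /pi_LV le_eqVlt; apply/orP; left; apply/eqP; ring.
have Ia := ILSE Lam Nu.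
have Ib := Ipit Lam Nu i s.
have Ic := It2 s.
have := le_Rintegral measurableT (ILSE Lam' Nu')
  (IntD' (IntD' Ia (IntZ' (sg * h) Ib)) (IntZ' (4 * beta * h ^+ 2) Ic))
  (fun w _ => pw w).
move=> H2.
rewrite (RintegralD measurableT (IntD' Ia (IntZ' (sg * h) Ib))
   (IntZ' (4 * beta * h ^+ 2) Ic)) in H2.
rewrite (RintegralD measurableT Ia (IntZ' (sg * h) Ib)) in H2.
rewrite (RintegralZl _ measurableT Ib) (RintegralZl _ measurableT Ic) in H2.
rewrite Hpen in Hle.
set A := Rintegral P setT _ in H2 *.
lra.
Qed.

Lemma Ipi (Lam Nu : 'M[R]_(2 * L + 1, K)) i :
  Int (fun w => pi_LV eta B beta tau p Lam Nu (X w) i).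
Proof.
apply: (@Int_le _ (cst 1)); last exact: int_cst.
  exact: (measurableT_comp (mpi Lam Nu i) mX).
move=> w; rewrite ger0_norm; first exact: softmax_le1.
exact: softmax_ge0.
Qed.

Lemma Iind s : Int (fun w => ind_eq s (S w) : R).
Proof.
apply: (@Int_le _ (cst 1)); last exact: int_cst.
  exact: mind.
exact: ind_bd.
Qed.

Lemma Iindpi (Lam Nu : 'M[R]_(2 * L + 1, K)) i s :
  Int (fun w => ind_eq s (S w) * pi_LV eta B beta tau p Lam Nu (X w) i).
Proof.
apply: (@intMbd _ _ _ P _ _ 1); first exact: Iind.
  exact: (measurableT_comp (mpi Lam Nu i) mX).
move=> w; rewrite ger0_norm; first exact: softmax_le1.
exact: softmax_ge0.
Qed.

Lemma pi_ident (Lam Nu : 'M[R]_(2 * L + 1, K)) i s :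
  Rintegral P setT (fun w => tfun tau p s (X w) * pi_LV eta B beta tau p Lam Nu (X w) i) =
  Rintegral P setT (fun w => pi_LV eta B beta tau p Lam Nu (X w) i)
  - (p s)^-1 * Rintegral P setT (fun w => ind_eq s (S w) * pi_LV eta B beta tau p Lam Nu (X w) i).
Proof.
have Itp : Int (fun w => tau s (X w) * pi_LV eta B beta tau p Lam Nu (X w) i).
  apply: (@intMbd _ _ _ P _ _ 1); first by case: (ItauX s).
    exact: (measurableT_comp (mpi Lam Nu i) mX).
  move=> w; rewrite ger0_norm; first exact: softmax_le1.
  exact: softmax_ge0.
have e1 : Rintegral P setT (fun w => ind_eq s (S w) * pi_LV eta B beta tau p Lam Nu (X w) i)
   = Rintegral P setT (fun w => tau s (X w) * pi_LV eta B beta tau p Lam Nu (X w) i).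
  rewrite /Rintegral; congr fine.
  have [_ [Ig H]] := ceS s.
  have bd x : `|pi_LV eta B beta tau p Lam Nu x i| <= 1.
    rewrite ger0_norm; first exact: softmax_le1.
    exact: softmax_ge0.
  have := (L3 P X mX _ _ (Iind s) Ig H (fun x => pi_LV eta B beta tau p Lam Nu x i) 1
    (mpi Lam Nu i) bd). move=> HH. exact: HH.
rewrite e1 -(RintegralZl _ measurableT Itp) -(RintegralB measurableT (Ipi Lam Nu i)).
  apply: eq_Rintegral => w _; rewrite /tfun; ring.
exact: IntZ'.
Qed.

Lemma Ufair_eq (Lam Nu : 'M[R]_(2 * L + 1, K)) i s :
  Ufair P X S (fun x => pi_LV eta B beta tau p Lam Nu x i) s =
  (`| Rintegral P setT (fun w => ind_eq s (S w) * pi_LV eta B beta tau p Lam Nu (X w) i)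
        * (p s)^-1
      - Rintegral P setT (fun w => pi_LV eta B beta tau p Lam Nu (X w) i)|)%:E.
Proof.
rewrite /Ufair (IntE _ (Ipi Lam Nu i)).
rewrite integral_mkcond.
have -> : ((fun w => (pi_LV eta B beta tau p Lam Nu (X w) i)%:E) \_ [set w | S w = s])
   = (fun w => (ind_eq s (S w) * pi_LV eta B beta tau p Lam Nu (X w) i)%:E).
  apply/funext => w; rewrite /restrict /ind_eq.
  have -> : (w \in [set w | S w = s]) = (S w == s).
    by apply/idP/idP => [/set_mem ->//|/eqP H]; exact/mem_set.
  by case: (S w == s); rewrite ?mul1r ?mul0r.
by rewrite (IntE _ (Iindpi Lam Nu i s)) -EFinM -EFinB abse_EFin.
Qed.

Lemma final (Lam Nu : 'M[R]_(2 * L + 1, K)) :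
  nonneg_mx Lam -> nonneg_mx Nu ->
  (forall Lam' Nu' : 'M[R]_(2 * L + 1, K), nonneg_mx Lam' -> nonneg_mx Nu' ->
     (Fobj P X S eta B beta tau eps Lam Nu
       <= Fobj P X S eta B beta tau eps Lam' Nu')%E) ->
  forall (s : 'I_K) (i : 'I_(2 * L + 1)),
    (Ufair P X S (fun x => pi_LV eta B beta tau (pS P S) Lam Nu x i) s
      <= (eps s)%:E)%E.
Proof.
move=> nL nN Hmin s i.
set A := Rintegral P setT (fun w => tfun tau p s (X w) *
                     pi_LV eta B beta tau p Lam Nu (X w) i).
set Q := Rintegral P setT (fun w => tfun tau p s (X w) ^+ 2).
have Q0 : 0 <= 4 * beta * Q.
  apply: mulr_ge0; first by apply: mulr_ge0 => //; exact: ltW.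
  by apply: Rintegral_ge0 => w _; exact: sqr_ge0.
have nE h : 0 < h -> nonneg_mx (Emx i s h).
  by move=> h0 j k; rewrite /Emx mxE; apply: mulr_ge0 => //; exact: ltW.
have nD (M : 'M[R]_(2 * L + 1, K)) h : nonneg_mx M -> 0 < h -> nonneg_mx (M + Emx i s h).
  by move=> nM h0 j k; rewrite mxE; apply: addr_ge0 => //; exact: nE.
have k1 : 0 <= 1 * A + eps s.
  apply: (small _ _ Q0) => h h0.
  apply: (core Lam Nu (Lam + Emx i s h) Nu i s 1 h h0 (expr1n _ 2)).
  - exact: Hmin (nD _ _ nL h0) nN.
  - by move=> x j; rewrite score_pertL.
  - exact: pen_pertL.
have k2 : 0 <= -1 * A + eps s.
  apply: (small _ _ Q0) => h h0.
  apply: (core Lam Nu Lam (Nu + Emx i s h) i s (-1) h h0).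
  - by rewrite sqrrN expr1n.
  - exact: Hmin nL (nD _ _ nN h0).
  - by move=> x j; rewrite score_pertN.
  - exact: pen_pertN.
rewrite Ufair_eq lee_fin.
have := pi_ident Lam Nu i s; rewrite -/A => eA.
set a := Rintegral P setT (fun w => ind_eq s (S w) * _) in eA *.
set b := Rintegral P setT (fun w => pi_LV _ _ _ _ _ _ _ _ _) in eA *.
have -> : a * (p s)^-1 - b = - A by rewrite eA; ring.
rewrite normrN ler_norml; apply/andP; split; lra.
Qed.

End main.

Theorem lemma3p2 (R : realType) (dT : measure_display) (T : measurableType dT)
  (P : probability T R) (K n : nat) (X : T -> n.-tuple R) (S : T -> 'I_K)
  (Y : T -> R) (eta : n.-tuple R -> R) (tau : 'I_K -> n.-tuple R -> R)
  (B : R) (L : nat) (beta : R) (eps : 'I_K -> R)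
  (Lam Nu : 'M[R]_(2 * L + 1, K)) :
  (1 < K)%N -> (0 < n)%N ->
  measurable_fun setT X ->
  (forall s, measurable [set w | S w = s]) ->
  measurable_fun setT Y ->
  P.-integrable setT (fun w => (Y w ^+ 2)%:E) ->
  is_cond_exp_fun P X Y eta ->
  (forall s, is_cond_exp_fun P X (fun w => ind_eq s (S w)) (tau s)) ->
  (forall s, (0 < P [set w | S w = s])%E) ->
  0 < B -> (0 < L)%N -> 0 < beta ->
  (forall s, 0 <= eps s <= 1) ->
  nonneg_mx Lam -> nonneg_mx Nu ->
  (forall Lam' Nu' : 'M[R]_(2 * L + 1, K), nonneg_mx Lam' -> nonneg_mx Nu' ->
     (Fobj P X S eta B beta tau eps Lam Nu
       <= Fobj P X S eta B beta tau eps Lam' Nu')%E) ->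
  forall (s : 'I_K) (i : 'I_(2 * L + 1)),
    (Ufair P X S (fun x => pi_LV eta B beta tau (pS P S) Lam Nu x i) s
      <= (eps s)%:E)%E.
Proof.
move=> _ _ mX mS mY IY2 ceY ceS _ _ _ b0 _ nL nN Hmin s i.
exact: (@final R dT T P K n X S Y eta tau B L beta eps mX mS mY IY2 ceY ceS b0
  Lam Nu nL nN Hmin s i).
Qed.
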